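(* Let $N=(V,E)$ be a tree-child phylogenetic network such that no two parents of a hybrid node are connected by a path. For all nodes $u,v\in V$ with $C(u)\neq C(v)$, the following are equivalent: (i) there is a non-trivial path $u\rightsquigarrow v$; (ii) $C(v)\subsetneq C(u)$.
   Context: A DAG is labeled in a finite set $S$ if its leaves (out-degree 0) are bijectively labeled by $S$. A tree node has in-degree at most 1; a hybrid node has in-degree greater than 1; a tree child of a node is a child that is a tree node. A tree-child phylogenetic network is a rooted DAG labeled in $S$ in which every non-leaf node has at least one tree child, no tree node has out-degree 1, and every hybrid node has out-degree exactly 1. The condition that no two parents of a hybrid node are connected by a path means: if $u_1,u_2$ are the parents of a hybrid node, there is no path $u_1\rightsquigarrow u_2$ nor $u_2\rightsquigarrow u_1$. A path is non-trivial if it has length at least 1. $C(u)$ is the set of leaves that are descendants of $u$. *)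

(* Defs.v *)
From mathcomp Require Import all_boot.
Set Implicit Arguments. Unset Strict Implicit. Unset Printing Implicit Defensive.

Section Network.
Variables (V : finType) (E : rel V).

Definition indeg (v : V) : nat := #|[set u | E u v]|.
Definition outdeg (v : V) : nat := #|[set w | E v w]|.
Definition leaf (v : V) : bool := outdeg v == 0.
Definition tree_node (v : V) : bool := indeg v <= 1.
Definition hybrid (v : V) : bool := 1 < indeg v.

Definition npath (u v : V) : Prop := exists w, E u w && connect E w v.

Definition acyclic : Prop := forall u, ~ npath u u.
Definition rooted : Prop :=
  exists r, [/\ indeg r = 0, forall v, connect E r v & forall v, indeg v = 0 -> v = r].

Definition labeled_in (S : finType) : Prop :=
  exists f : S -> V, injective f /\ forall v, leaf v <-> exists s, f s = v.

Definition tree_child_network (S : finType) : Prop :=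
  [/\ acyclic, rooted, labeled_in S &
     [/\ (forall u, ~~ leaf u -> exists w, E u w && tree_node w),
      (forall u, tree_node u -> outdeg u != 1) &
      (forall h, hybrid h -> outdeg h = 1)]].

Definition no_hybrid_parents_path : Prop :=
  forall h u1 u2, hybrid h -> E u1 h -> E u2 h -> u1 != u2 ->
    ~~ connect E u1 u2.

Definition C (u : V) : {set V} := [set x | leaf x & connect E u x].

End Network.

(* Main.v *)
Require Import Defs.
From mathcomp Require Import all_boot.

Section L.
Variables (V : finType) (E : rel V).

Lemma connect_last (x w : V) : connect E x w -> x = w \/ exists y, connect E x y /\ E y w.
Proof.
move/connectP=> [p]; case/lastP: p => [|p y] /=.
  by move=> _ ->; left.
rewrite rcons_path last_rcons => /andP[Hp He] ->; right.
exists (last x p); split => //; apply/connectP; by exists p.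
Qed.

Lemma connect_first (x w : V) : connect E x w -> x = w \/ exists y, E x y /\ connect E y w.
Proof.
move/connectP=> [p]; case: p => [|y p] /=.
  by move=> _ ->; left.
move=> /andP[He Hp] Hl; right; exists y; split => //; apply/connectP; by exists p.
Qed.

Lemma indeg_uniq (w a b : V) : tree_node E w -> E a w -> E b w -> a = b.
Proof.
rewrite /tree_node /indeg => H Ha Hb; apply/eqP; apply/negPn/negP => Hne.
have : [set a; b] \subset [set u | E u w].
  by apply/subsetP => z; rewrite !inE => /orP[] /eqP ->.
move/subset_leq_card; rewrite cards2 Hne => H2.
by have := leq_trans H2 H.
Qed.

Lemma claim : acyclic E -> (forall u, ~~ leaf E u -> exists w, E u w && tree_node E w) ->
  forall v, exists l, [/\ leaf E l, connect E v l &
      forall x, connect E x l -> connect E x v \/ connect E v x].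
Proof.
move=> Hac Htc.
suff: forall n v, #|[set y | connect E v y]| <= n -> exists l, [/\ leaf E l, connect E v l &
      forall x, connect E x l -> connect E x v \/ connect E v x].
  by move=> H v; apply: (H _ v (leqnn _)).
elim=> [|n IH] v Hn.
  have H0 : 0 < #|[set y | connect E v y]| by apply/card_gt0P; exists v; rewrite inE connect0.
  by have := leq_trans H0 Hn.
case Hl: (leaf E v).
  exists v; split => // x Hxv; by left.
have [w /andP[Evw Tw]] := Htc v (negbT Hl).
have Hsub : [set y | connect E w y] \proper [set y | connect E v y].
  rewrite properE; apply/andP; split.
    apply/subsetP => z; rewrite !inE => Hz; apply: connect_trans Hz.
    exact: connect1.
  apply/negP => /subsetP /(_ v); rewrite !inE connect0 => /(_ isT) Hwv.
  by apply: (Hac v); exists w; rewrite Evw.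
have Hlt := proper_card Hsub.
have Hw : #|[set y | connect E w y]| <= n by rewrite -ltnS; exact: leq_trans Hlt Hn.
have [l [Ll Cwl Hx]] := IH w Hw.
exists l; split => //.
  apply: connect_trans Cwl; exact: connect1.
move=> x /Hx [Hxw|Hwx].
  case: (@connect_last x w Hxw) => [->|[y [Hxy Eyw]]].
    by right; exact: connect1.
  by left; rewrite (@indeg_uniq w v y Tw Evw Eyw).
by right; apply: connect_trans Hwx; exact: connect1.
Qed.
End L.

Theorem lemma6 (S V : finType) (E : rel V) :
  tree_child_network E S ->
  no_hybrid_parents_path E ->
  forall u v : V, C E u != C E v ->
    (npath E u v <-> C E v \proper C E u).
Proof.
move=> [Hac _ _ [Htc _ _]] _ u v Hne; split.
  move=> [w /andP[Euw Cwv]].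
  have Cuv : connect E u v by apply: connect_trans Cwv; exact: connect1.
  rewrite properEneq eq_sym Hne /=; apply/subsetP => x; rewrite !inE => /andP[-> Hx] /=.
  exact: connect_trans Hx.
rewrite properE => /andP[Hvu Huv].
have [l [Ll Cvl Hx]] := @claim _ E Hac Htc v.
have : l \in C E u by apply: (subsetP Hvu); rewrite inE Ll.
rewrite inE => /andP[_ /Hx] [Cuv|Cvu].
  case: (@connect_first _ E u v Cuv) => [Heq|[w [Euw Cwv]]].
    by rewrite Heq eqxx in Hne.
  by exists w; rewrite Euw.
exfalso; move/negP: Huv; apply; apply/subsetP => x; rewrite !inE => /andP[-> Hx'] /=.
exact: connect_trans Hx'.
Qed.
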